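(* Let $\Lambda\subseteq\mathbb{Z}^n$ be an antichain lattice and $A$ a generic $\Lambda$-finite set. Then for each $i$, $N_i(A)$ is a $\Lambda$-finite set under the action $N_i(A)\times\Lambda\to N_i(A)$, $(\sigma,\lambda)\mapsto\sigma+\lambda$; i.e. $N_i(A)+\Lambda=N_i(A)$ and $N_i(A)$ consists of finitely many $\Lambda$-orbits.
   Context: Notation: $\le,\ll,\vee$ componentwise on $\mathbb{Z}^n$; an antichain lattice is a subgroup of $\mathbb{Z}^n$ whose distinct elements are pairwise incomparable. $T_\eta=\eta-\mathbb{N}^n$, $T^o_\eta=\{\beta:\beta\ll\eta\}$; the $X$-face ($\emptyset\ne X\subseteq[n]$) of $T_\eta$ is $\{\alpha\in T_\eta:\alpha_i=\eta_i\ \forall i\in X\}$. $A$ is generic if whenever $T^o_\eta\cap A=\emptyset$, each face of $T_\eta$ contains at most one point of $A$. $A$ is $\Lambda$-finite if $A=A+\Lambda$ and there is a finite $A_0\subseteq A$ with $A=A_0+\Lambda$. $N_i(A)$ is the set of strongly neighborly subsets $\sigma\subseteq A$ with $|\sigma|=i+1$, where $\sigma$ is strongly neighborly if $\sigma'\subseteq A$, $\vee\sigma'=\vee\sigma$ imply $\sigma'=\sigma$; $\sigma+\lambda=\{\alpha+\lambda:\alpha\in\sigma\}$. *)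

(* Defs.v *)
From HB Require Import structures.
From mathcomp Require Import all_boot all_order all_algebra.
From mathcomp Require Export finmap.
Set Implicit Arguments.
Unset Strict Implicit.
Unset Printing Implicit Defensive.
Import Order.TTheory GRing.Theory Num.Theory.
Local Open Scope fset_scope.
Local Open Scope ring_scope.

Definition pt (n : nat) := {ffun 'I_n -> int}.

Definition ptle n (x y : pt n) : Prop := forall j, x j <= y j.
Definition ptlt n (x y : pt n) : Prop := forall j, x j < y j.

(* join (componentwise max) of a finite set; meaningful for nonempty s
   (the default value is an element of s, so idempotence of max makes it exact). *)
Definition vee n (s : {fset pt n}) : pt n :=
  [ffun j => \big[Order.max/(head (0 : pt n) (enum_fset s)) j]_(x <- enum_fset s) x j].

Definition antichain_lattice n (L : pt n -> Prop) : Prop :=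
  L 0 /\ (forall x y, L x -> L y -> L (x - y)) /\
  (forall x y, L x -> L y -> ptle x y -> x = y).

Definition L_finite n (L : pt n -> Prop) (A : pt n -> Prop) : Prop :=
  (forall a l, A a -> L l -> A (a + l)) /\
  (exists A0 : {fset pt n}, (forall a, a \in A0 -> A a) /\
     forall a, A a -> exists2 a0, a0 \in A0 & exists2 l, L l & a = a0 + l).

Definition face n (eta : pt n) (X : {set 'I_n}) (a : pt n) : Prop :=
  ptle a eta /\ forall i, i \in X -> a i = eta i.

Definition generic n (A : pt n -> Prop) : Prop :=
  forall eta : pt n,
    (forall b, ptlt b eta -> ~ A b) ->
    forall X : {set 'I_n}, X != set0 ->
      forall a b, A a -> A b -> face eta X a -> face eta X b -> a = b.

Definition strongly_neighborly n (A : pt n -> Prop) (s : {fset pt n}) : Prop :=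
  (forall a, a \in s -> A a) /\
  forall s' : {fset pt n}, s' != fset0 -> (forall a, a \in s' -> A a) ->
    vee s' = vee s -> s' = s.

Definition N_ n (i : nat) (A : pt n -> Prop) (s : {fset pt n}) : Prop :=
  strongly_neighborly A s /\ #|` s| = i.+1.

Definition ftranslate n (s : {fset pt n}) (l : pt n) : {fset pt n} :=
  [fset x + l | x in s].

(* Main.v *)
Require Import Defs.
From HB Require Import structures.
From mathcomp Require Import all_boot all_order all_algebra.
From mathcomp Require Import finmap zify.
From Stdlib Require Import Classical ClassicalEpsilon.
Import Order.TTheory GRing.Theory Num.Theory.
Local Open Scope fset_scope.
Local Open Scope ring_scope.
Set Implicit Arguments.
Unset Strict Implicit.

Lemma bigmax_spec (T : Type) (r : seq T) (F : T -> int) (d : int) :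
  (forall x, List.In x r -> F x <= \big[Order.max/d]_(y <- r) F y) /\
  (d <= \big[Order.max/d]_(y <- r) F y) /\
  (\big[Order.max/d]_(y <- r) F y = d \/ exists x, List.In x r /\ \big[Order.max/d]_(y <- r) F y = F x).
Proof.
elim: r => [|a r [IH1 [IH2 IH3]]]; rewrite ?big_nil ?big_cons.
  by split => //; split => //; left.
split; [|split].
- move=> x [<-|Hx]; first by rewrite le_max lexx.
  by rewrite le_max (IH1 _ Hx) orbT.
- by rewrite le_max IH2 orbT.
- case: (leP (F a) (\big[Order.max/d]_(y <- r) F y)) => Hle.
  + case: IH3 => [E|[x [Hx E]]]; first by left.
    right; exists x; split => //; by right.
  + right; exists a; split => //; by left.
Qed.

Lemma inIn (T : eqType) (x : T) (r : seq T) : x \in r <-> List.In x r.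
Proof.
elim: r => [|a r IH] //=; rewrite in_cons; split.
- by case/orP => [/eqP ->|/IH]; [left|right].
- by case => [->|/IH ->]; rewrite ?eqxx ?orbT.
Qed.

Lemma vee_le n (s : {fset pt n}) x : x \in s -> ptle x (vee s).
Proof.
move=> Hx j; rewrite /vee ffunE.
have [H1 _] := bigmax_spec (enum_fset s) (fun y : pt n => y j) ((head 0 (enum_fset s)) j).
by apply: H1; apply/inIn.
Qed.

Lemma vee_ex n (s : {fset pt n}) : s != fset0 ->
  forall j, exists2 x, x \in s & vee s j = x j.
Proof.
move=> /fset0Pn [x0 Hx0] j; rewrite /vee ffunE.
have [_ [_ H3]] := bigmax_spec (enum_fset s) (fun y : pt n => y j) ((head 0 (enum_fset s)) j).
case: H3 => [->|[x [Hx ->]]]; last by exists x => //; apply/inIn.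
exists (head 0 (enum_fset s)) => //.
suff: head 0 (enum_fset s) \in enum_fset s by [].
move: Hx0; rewrite -[x0 \in s]/(x0 \in enum_fset s).
by case: (enum_fset s) => //= a r _; rewrite mem_head.
Qed.

Lemma vee_uniq n (s : {fset pt n}) v : s != fset0 ->
  (forall x, x \in s -> ptle x v) -> (forall j, exists2 x, x \in s & v j = x j) ->
  vee s = v.
Proof.
move=> s0 H1 H2; apply/ffunP => j.
have [x Hx Ex] := vee_ex s0 j; have [y Hy Ey] := H2 j.
apply/le_anti; rewrite Ex Ey; apply/andP; split.
- by rewrite -Ey; apply: H1.
- by rewrite -Ex; apply: vee_le.
Qed.

Lemma mem_ftr n (s : {fset pt n}) l y : (y \in ftranslate s l) = (y - l \in s).
Proof.
apply/imfsetP/idP => [[x Hx ->]|H]; first by rewrite addrK.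
by exists (y - l) => //; rewrite subrK.
Qed.

Lemma ftrK n (s : {fset pt n}) l : ftranslate (ftranslate s l) (- l) = s.
Proof. by apply/fsetP => y; rewrite !mem_ftr opprK addrK. Qed.

Lemma card_ftr n (s : {fset pt n}) l : #|` ftranslate s l| = #|` s|.
Proof. by rewrite card_imfset //; apply: addIr. Qed.

Lemma ftr0 n (s : {fset pt n}) l : s != fset0 -> ftranslate s l != fset0.
Proof. by rewrite -!cardfs_gt0 card_ftr. Qed.

Lemma vee_ftr n (s : {fset pt n}) l : s != fset0 -> vee (ftranslate s l) = vee s + l.
Proof.
move=> s0; apply: vee_uniq; first exact: ftr0.
- move=> x; rewrite mem_ftr => /vee_le H j; have := H j; move: (vee s) => v.
  rewrite !ffunE; move: (x j) (l j) (v j) => a b c; lia.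
- move=> j; have [x Hx E] := vee_ex s0 j; exists (x + l).
  + by rewrite mem_ftr addrK.
  + by rewrite [LHS]ffunE E ffunE.
Qed.

Lemma Lopp n (L : pt n -> Prop) l : antichain_lattice L -> L l -> L (- l).
Proof. by case=> [L0 [Lsub _]] Ll; have := Lsub _ _ L0 Ll; rewrite sub0r. Qed.

Lemma Ntr n (L A : pt n -> Prop) i s l : antichain_lattice L -> L_finite L A ->
  N_ i A s -> L l -> N_ i A (ftranslate s l).
Proof.
move=> HL [Aadd _] [[sA sU] card] Ll.
have s0: s != fset0 by rewrite -cardfs_gt0 card.
have Lm := Lopp HL Ll.
split; last by rewrite card_ftr.
split.
- move=> a; rewrite mem_ftr => /sA Ha; have := Aadd _ _ Ha Ll; by rewrite subrK.
- move=> s' s'0 s'A Ev.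
  have E: ftranslate s' (-l) = s.
    apply: sU.
    + exact: ftr0.
    + move=> a; rewrite mem_ftr opprK => /s'A H; have := Aadd _ _ H Lm; by rewrite addrK.
    + by rewrite vee_ftr // Ev vee_ftr // addrK.
  by rewrite -E; have := ftrK s' (-l); rewrite opprK => ->.
Qed.
Section NatPart.
Local Open Scope nat_scope.

Lemma homo_le (g : nat -> nat) : (forall k, g k <= g k.+1) -> forall m m', m <= m' -> g m <= g m'.
Proof.
move=> H m m' Hm; apply: (homo_leq (r := fun a b => a <= b)) => //.
- by move=> y x z; apply: leq_trans.
Qed.

Lemma homo_lt (g : nat -> nat) : (forall k, g k < g k.+1) -> forall m m', m < m' -> g m < g m'.
Proof.
move=> H m m' Hm; apply: (homo_ltn (r := fun a b => a < b)) => //.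
by move=> y x z; apply: ltn_trans.
Qed.

Lemma min_after (f : nat -> nat) i :
  exists j, i <= j /\ forall j', i <= j' -> f j <= f j'.
Proof.
suff H: forall v j, i <= j -> f j <= v -> exists j, i <= j /\ forall j', i <= j' -> f j <= f j'.
  exact: (H (f i) i).
elim=> [|v IH] j Hij Hfj.
  exists j; split => // j' _; by move: Hfj; rewrite leqn0 => /eqP ->.
case: (classic (exists j', i <= j' /\ f j' < f j)) => [[j' [H1 H2]]|Hno].
  by apply: (IH j') => //; rewrite -ltnS; apply: leq_trans Hfj.
exists j; split => // j' Hj'; rewrite leqNgt; apply/negP => lt; apply: Hno.
by exists j'.
Qed.

Fixpoint iterphi (g : nat -> nat) k := if k is k'.+1 then g (iterphi g k').+1 else g 0.

Lemma subseq_mono (f : nat -> nat) :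
  exists phi, (forall k, phi k < phi k.+1) /\ forall k, f (phi k) <= f (phi k.+1).
Proof.
pose H := fun i => constructive_indefinite_description _ (min_after f i).
pose mi i := proj1_sig (H i).
have mi1 i : i <= mi i by rewrite /mi; case: (H i) => /= x [].
have mi2 i j' : i <= j' -> f (mi i) <= f j'.
  by rewrite /mi; case: (H i) => /= x [_]; apply.
exists (iterphi mi); split.
- by move=> k /=; apply: mi1.
- case => [|k] /=; first by apply: mi2.
  apply: mi2; apply: leq_trans (mi1 _) _; exact: leq_trans (leqnSn _) (mi1 _).
Qed.

Lemma multi_mono (I : eqType) (F : I -> nat -> nat) (r : seq I) :
  exists phi, (forall k, phi k < phi k.+1) /\
    forall i, i \in r -> forall k, F i (phi k) <= F i (phi k.+1).
Proof.
elim: r => [|a r [phi [Hphi HF]]].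
  by exists id; split.
have [psi [Hpsi Ha]] := subseq_mono (fun k => F a (phi k)).
exists (fun k => phi (psi k)); split.
- by move=> k; apply: homo_lt.
- move=> i; rewrite in_cons => /orP [/eqP ->|Hi] k; first exact: Ha.
  apply: (homo_le (g := fun k => F i (phi k))); first exact: HF.
  exact: ltnW.
Qed.

Fixpoint pre (T : Type) (h : seq T -> T) k : seq T :=
  if k is k'.+1 then h (pre h k') :: pre h k' else [::].

Lemma inf_seq (T : eqType) (P : T -> Prop) :
  (forall Lst : seq T, exists x, P x /\ x \notin Lst) ->
  exists b : nat -> T, (forall k, P (b k)) /\ injective b.
Proof.
move=> H.
pose h := fun Lst => proj1_sig (constructive_indefinite_description _ (H Lst)).
have hP Lst : P (h Lst) /\ h Lst \notin Lst.
  by rewrite /h; case: (constructive_indefinite_description _ (H Lst)).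
have Hin k k' : k < k' -> h (pre h k) \in pre h k'.
  elim: k' => [//|k' IH]; rewrite ltnS leq_eqVlt => /orP [/eqP ->|/IH Hk] /=.
    by rewrite mem_head.
  by rewrite in_cons Hk orbT.
exists (fun k => h (pre h k)); split; first by move=> k; case: (hP (pre h k)).
move=> k k' E; case: (ltngtP k k') => // Hk.
- have := Hin _ _ Hk; rewrite E; by case: (hP (pre h k')) => _ /negP.
- have := Hin _ _ Hk; rewrite -E; by case: (hP (pre h k)) => _ /negP.
Qed.
End NatPart.

Lemma N_below n (A : pt n -> Prop) i s b :
  N_ i A s -> A b -> ptle b (vee s) -> b \in s.
Proof.
move=> [[sA sU] card] Ab Hb.
have s0: s != fset0 by rewrite -cardfs_gt0 card.
have E : b |` s = s.
  apply: sU.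
  - by apply/fset0Pn; exists b; rewrite fsetU11.
  - by move=> a; rewrite in_fset1U => /orP [/eqP ->|/sA].
  - apply: vee_uniq.
    + by apply/fset0Pn; exists b; rewrite fsetU11.
    + by move=> x; rewrite in_fset1U => /orP [/eqP ->|/vee_le].
    + move=> j; have [x Hx Ex] := vee_ex s0 j; exists x => //.
      by rewrite in_fset1U Hx orbT.
by rewrite -E fsetU11.
Qed.

Definition posz (x : int) : nat := if 0 <= x then absz x else 0%N.
Definition negz (x : int) : nat := if x < 0 then absz x else 0%N.

Lemma posneg (x y : int) : (posz x <= posz y)%N -> (negz x <= negz y)%N ->
  (0 <= y -> x <= y) /\ (y < 0 -> x <= 0).
Proof.
rewrite /posz /negz.
case: (lerP 0 x) => hx; case: (lerP 0 y) => hy; case: (ltrP x 0) => hx'; case: (ltrP y 0) => hy'; lia.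
Qed.

Lemma Bset_fin n (A : pt n -> Prop) i (a0 : pt n) :
  exists Lst : seq (pt n), forall b,
    (exists s, N_ i A s /\ a0 \in s /\ b \in s) -> b \in Lst.
Proof.
apply: NNPP => Hno.
have H : forall Lst : seq (pt n), exists x,
    (exists s, N_ i A s /\ a0 \in s /\ x \in s) /\ x \notin Lst.
  move=> Lst; apply: NNPP => H1; apply: Hno; exists Lst => b Hb.
  apply: NNPP => H2; apply: H1; exists b; split => //; exact/negP.
have [b [Hb binj]] := inf_seq H.
pose u k j := b k j - a0 j.
pose F (p : 'I_n * bool) k := if p.2 then posz (u k p.1) else negz (u k p.1).
have [phi [Hphi HF]] := multi_mono F (enum {: 'I_n * bool}).
have [s [Ns [a0s bKs]]] := Hb (phi i.+1).
have inS m : (m <= i.+1)%N -> b (phi m) \in s.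
  move=> Hm; apply: (N_below Ns).
  - have [s' [[[s'A _] _] [_ H']]] := Hb (phi m); exact: s'A.
  - move=> j.
    have H1 : (posz (u (phi m) j) <= posz (u (phi i.+1) j))%N.
      apply: (homo_le (g := fun k => F (j, true) (phi k))) => // k.
      by apply: HF; rewrite mem_enum.
    have H2 : (negz (u (phi m) j) <= negz (u (phi i.+1) j))%N.
      apply: (homo_le (g := fun k => F (j, false) (phi k))) => // k.
      by apply: HF; rewrite mem_enum.
    have [P1 P2] := posneg H1 H2.
    have V1 := vee_le a0s j; have V2 := vee_le bKs j.
    move: P1 P2 V1 V2; rewrite /u.
    move: (b (phi m) j) (b (phi i.+1) j) (a0 j) (vee s j) => x y z w; lia.
pose S := [fset x in map (fun m => b (phi m)) (iota 0 i.+2)].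
have : (#|` S| <= #|` s|)%N.
  apply: fsubset_leq_card; apply/fsubsetP => x.
  rewrite /S => /imfsetP [y /mapP [m]]; rewrite mem_iota add0n ltnS => Hm -> ->.
  exact: inS.
rewrite /S card_fseq undup_id.
  by rewrite size_map size_iota Ns.2 ltnn.
rewrite map_inj_uniq ?iota_uniq // => m m' /binj E.
case: (ltngtP m m') => // Hmm.
- by have := homo_lt Hphi Hmm; rewrite E ltnn.
- by have := homo_lt Hphi Hmm; rewrite E ltnn.
Qed.

Lemma sel (T : choiceType) (C : seq T) : forall (P : {fset T} -> Prop),
  exists F : seq {fset T}, (forall t, t \in F -> P t) /\
    forall s, P s -> (forall x, x \in s -> x \in C) -> s \in F.
Proof.
elim: C => [|c C IH] P.
  case: (classic (P fset0)) => H0.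
  - exists [:: fset0]; split; first by move=> t; rewrite inE => /eqP ->.
    move=> s _ Hs; have -> : s = fset0; last by rewrite inE.
    by apply/fsetP => x; rewrite in_fset0; apply/negP => /Hs.
  - exists [::]; split => // s Ps Hs; exfalso; apply: H0.
    have <- // : s = fset0.
    by apply/fsetP => x; rewrite in_fset0; apply/negP => /Hs.
have [F1 [H11 H12]] := IH P.
have [F2 [H21 H22]] := IH (fun t => P (c |` t)).
exists (F1 ++ map (fun t => c |` t) F2); split.
- move=> t; rewrite mem_cat => /orP [/H11 //|/mapP [t' /H21 Ht' ->]] //.
- move=> s Ps Hs; rewrite mem_cat; case cs: (c \in s).
  + apply/orP; right; apply/mapP; exists (s `\ c); last by rewrite fsetD1K.
    apply: H22; first by rewrite fsetD1K.
    move=> x; rewrite in_fsetD1 => /andP [xc /Hs]; rewrite in_cons.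
    by case/orP => // /eqP E; rewrite E eqxx in xc.
  + apply/orP; left; apply: H12 => // x xs; have := Hs _ xs; rewrite in_cons.
    by case/orP => // /eqP E; rewrite -E xs in cs.
Qed.

Lemma Bset_fin_all n (A : pt n -> Prop) i (R : seq (pt n)) :
  exists Big : seq (pt n), forall a0, a0 \in R -> forall b,
    (exists s, N_ i A s /\ a0 \in s /\ b \in s) -> b \in Big.
Proof.
elim: R => [|a R [Big HBig]]; first by exists [::].
have [L1 HL1] := Bset_fin A i a.
exists (L1 ++ Big) => a0; rewrite in_cons => /orP [/eqP ->|Ha] b Hb; rewrite mem_cat.
- by rewrite HL1.
- by rewrite (HBig a0 Ha b Hb) orbT.
Qed.

Theorem mainTheorem6 (n : nat) (L : pt n -> Prop) (A : pt n -> Prop) :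
  antichain_lattice L -> generic A -> L_finite L A ->
  forall i : nat,
    (forall s l, N_ i A s -> L l -> N_ i A (ftranslate s l)) /\
    (exists F : seq {fset pt n},
        (forall t, t \in F -> N_ i A t) /\
        forall s, N_ i A s -> exists2 t, t \in F & exists2 l, L l & s = ftranslate t l).
Proof.
move=> HL _ HA i; split; first by move=> s l Ns Ll; exact: (Ntr HL HA Ns Ll).
move: (HA); rewrite /L_finite => -[_ [A0 [A0A A0cov]]].
have [Big HBig] := Bset_fin_all A i (enum_fset A0).
have [F [HF1 HF2]] := sel Big (N_ i A).
exists F; split => // s Ns.
have s0: s != fset0 by rewrite -cardfs_gt0 Ns.2.
have [al als] := fset0Pn _ s0.
have [a0 a0A [l Ll Eal]] := A0cov _ (Ns.1.1 _ als).
have Nt := Ntr HL HA Ns (Lopp HL Ll).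
have a0t : a0 \in ftranslate s (- l) by rewrite mem_ftr opprK -Eal.
exists (ftranslate s (- l)).
  apply: HF2 => // x xt; apply: (HBig a0 a0A x).
  by exists (ftranslate s (- l)).
exists l => //; have := ftrK s (- l); rewrite opprK => ->; done.
Qed.
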